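(* Let $G$ be a graph on $n$ vertices. If $G$ has a spanning subgraph $H$ (i.e. $H$ has the same vertex set as $G$ and $E(H)\subseteq E(G)$) such that $H$ is bipartite and $\delta(H)\geq 2$, then $F(G)\geq \lceil n/2\rceil$.
   Context: All graphs are finite and simple. Given a graph $G=(V,E)$ and a set $S\subseteq V$ of filled vertices, the color change rule is: if a filled vertex $v$ has exactly one unfilled neighbor $w$, then $w$ becomes filled. The derived set of $S$ is the set of filled vertices obtained after applying the rule until no further application is possible. $S$ is a zero forcing set if its derived set is $V$; otherwise $S$ is a failed zero forcing set. The failed zero forcing number $F(G)$ is the maximum size of a failed zero forcing set of $G$. *)

(* Defs.v *)
From mathcomp Require Import all_boot all_order.
Set Implicit Arguments. Unset Strict Implicit. Unset Printing Implicit Defensive.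

Definition simple_graph (T : finType) (e : rel T) : Prop :=
  symmetric e /\ irreflexive e.

Section ZeroForcing.
Variables (T : finType) (e : rel T).

Definition nbhd (v : T) : {set T} := [set w | e v w].

(* One round of the color change rule: add every vertex w that is the unique
   unfilled neighbor of some filled vertex v. *)
Definition cc_step (A : {set T}) : {set T} :=
  A :|: [set w | [exists v, [&& v \in A, e v w, w \notin A &
                   [forall u, (e v u && (u != w)) ==> (u \in A)]]]].

(* Each round is
   monotone and the set only grows, so after #|T| rounds a fixed point is
   reached; this is the (order-independent) derived set. *)
Definition derived_set (S : {set T}) : {set T} := iter #|T| cc_step S.

Definition zero_forcing_set (S : {set T}) : bool := derived_set S == [set: T].
Definition failed_zfs (S : {set T}) : bool := ~~ zero_forcing_set S.

(* F(G) = max size of a failed zero forcing set (0 if none exists). *)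
Definition failed_zf_number : nat :=
  \max_(S : {set T} | failed_zfs S) #|S|.

End ZeroForcing.

Definition min_deg_ge (T : finType) (e : rel T) (k : nat) : Prop :=
  forall v : T, k <= #|[set w | e v w]|.

Definition bipartite (T : finType) (e : rel T) : Prop :=
  exists c : T -> bool, forall u v, e u v -> c u != c v.

Definition spanning_subgraph (T : finType) (h g : rel T) : Prop :=
  simple_graph h /\ forall u v, h u v -> g u v.

(* Main.v *)
Require Import Defs.
From mathcomp Require Import all_boot all_order.
From mathcomp Require Import zify.

Lemma iter_fix (A : Type) (f : A -> A) x n : f x = x -> iter n f x = x.
Proof. by move=> H; elim: n => //= n ->. Qed.

Theorem corollary3 (T : finType) (g h : rel T) :
  simple_graph g ->
  spanning_subgraph h g ->
  bipartite h ->
  min_deg_ge h 2 ->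
  failed_zf_number g >= (#|T| + 1) %/ 2.
Proof.
move=> [gs gi] [[hs hi] hg] [c hc] md.
have [n0|] := posnP #|T|; first by rewrite n0.
move/card_gt0P=> [v0 _].
have nb : forall v, exists w, h v w.
  move=> v; have := md v => /ltnW.
  by move/card_gt0P=> [w]; rewrite inE => ?; exists w.
pose S b := [set x | c x == b].
have fl : forall b, failed_zfs g (S b).
  move=> b; rewrite /failed_zfs /zero_forcing_set /derived_set.
  have st : cc_step g (S b) = S b.
    apply/setP=> w; rewrite /cc_step in_setU; apply/idP/idP; last by move=> ->.
    case/orP=> // /[!inE] /existsP [v /and4P [vS _ wS /forallP Hu]].
    have : 1 < #|[set u | h v u]| := md v.
    rewrite (cardsD1 w) => H2.
    have : 0 < #|[set u | h v u] :\ w|.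
      by move: H2 (leq_b1 (w \in [set u | h v u])); lia.
    move=> /card_gt0P [u].
    rewrite !inE => /andP [uw huv].
    move: (Hu u); rewrite (hg _ _ huv) uw /= inE => cu.
    by move: (hc _ _ huv); rewrite inE in vS; rewrite (eqP cu) (eqP vS) eqxx.
  rewrite iter_fix //; apply/eqP => /setP E.
  have [w hw] := nb v0.
  have : (if c v0 == b then w else v0) \in S b by rewrite E inE.
  rewrite inE; case: ifP => [/eqP <-|/negbT/negP //].
  by rewrite eq_sym (negPf (hc _ _ hw)).
have le : forall b, #|S b| <= failed_zf_number g.
  by move=> b; apply: (leq_bigmax_cond _ (fl b)).
have cT : #|S true| + #|S false| = #|T|.
  rewrite -(cardsC (S true)); congr (_ + _); apply: eq_card => x.
  by rewrite !inE; case: (c x).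
have := le true; have := le false; lia.
Qed.
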